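(* Every $P_2$-irreducible tree $T$ is of one of the following forms: (1) $K_1$; (2) $P_2$ (a single edge); (3) a star $K_{1,n}$ with $n\geq 3$; (4) a tree containing at least two distinct vertices each of which is adjacent to at least two leaves.
   Context: A graph has a pendant $P_2$ if it contains distinct vertices $a,b,w$ such that $a$ has degree $1$ and is adjacent to $b$, and $b$ has degree $2$ with neighbors exactly $a$ and $w$ (i.e., a path on two vertices $a,b$ attached to the rest of the graph by the single edge $bw$). A graph is $P_2$-irreducible if it has no pendant $P_2$. A leaf is a vertex of degree $1$. *)

(* Defs.v *)
From mathcomp Require Import all_boot.
Set Implicit Arguments. Unset Strict Implicit. Unset Printing Implicit Defensive.

Definition simple_graph (T : finType) (e : rel T) : Prop :=
  symmetric e /\ irreflexive e.

Definition deg (T : finType) (e : rel T) (x : T) : nat := #|[set y | e x y]|.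

Definition leaf (T : finType) (e : rel T) (x : T) : bool := deg e x == 1.

Definition is_cycle (T : finType) (e : rel T) (s : seq T) : bool :=
  [&& 3 <= size s, uniq s & cycle e s].

Definition connected (T : finType) (e : rel T) : Prop :=
  forall x y : T, connect e x y.

Definition acyclic (T : finType) (e : rel T) : Prop :=
  forall s : seq T, ~~ is_cycle e s.

Definition is_tree (T : finType) (e : rel T) : Prop :=
  [/\ simple_graph e, 0 < #|T|, connected e & acyclic e].

Definition has_pendant_P2 (T : finType) (e : rel T) : Prop :=
  exists a b w : T,
    [/\ [&& a != b, b != w & a != w],
        deg e a = 1, e a b, deg e b = 2 & e b a && e b w].

Definition P2_irreducible (T : finType) (e : rel T) : Prop :=
  ~ has_pendant_P2 e.

Definition is_K1 (T : finType) (e : rel T) : Prop := #|T| = 1.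

Definition is_P2 (T : finType) (e : rel T) : Prop :=
  exists a b : T, [/\ a != b, e a b & forall x, (x == a) || (x == b)].

Definition is_star (T : finType) (e : rel T) (n : nat) : Prop :=
  #|T| = n.+1 /\
  exists c : T, forall x y : T,
    e x y = ((x == c) && (y != c)) || ((y == c) && (x != c)).

Definition two_leaf_nbrs (T : finType) (e : rel T) (x : T) : bool :=
  2 <= #|[set y | e x y && leaf e y]|.

(* Main.v *)
Require Import Defs.
From mathcomp Require Import all_boot.
From mathcomp Require Import zify.
From Stdlib Require Import Classical.

Set Implicit Arguments. Unset Strict Implicit. Unset Printing Implicit Defensive.

Definition good (T : finType) (e : rel T) (s : seq T) : bool :=
  if s is x :: p then uniq (x :: p) && path e x p else false.

Lemma good_size (T : finType) (e : rel T) s : good e s -> size s <= #|T|.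
Proof.
case: s => [//|x p] /andP[u _].
move/card_uniqP: u => <-; exact: max_card.
Qed.

Lemma exists_max (T : finType) (e : rel T) s0 : good e s0 ->
  exists s, [/\ good e s, size s0 <= size s & forall t, good e t -> size t <= size s].
Proof.
move=> g0.
suff H : forall k s1, good e s1 -> #|T| - size s1 <= k -> exists s,
   [/\ good e s, size s1 <= size s & forall t, good e t -> size t <= size s].
  exact: (H #|T| s0 g0 (leq_subr _ _)).
elim=> [|k IH] s1 g1 hk.
- exists s1; split=> // t gt; have := good_size gt; have := good_size g1; lia.
- case: (classic (exists t, good e t /\ size s1 < size t)) => [[t [gt lt]]|nt].
  + have hk' : #|T| - size t <= k by have := good_size gt; lia.
    have [s [gs ls ms]] := IH t gt hk'.
    exists s; split=> //; lia.
  + exists s1; split=> // t gt; case: (leqP (size t) (size s1)) => // lt.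
    by exfalso; apply: nt; exists t.
Qed.

Lemma nocyc (T : finType) (e : rel T) x p y : acyclic e ->
  uniq (x :: rcons p y) -> path e x (rcons p y) -> e y x -> p = [::].
Proof.
move=> ac u pa eyx; case: p u pa => [//|z p] u pa.
have := ac (x :: rcons (z :: p) y).
rewrite /is_cycle u /=.
have : path e x (rcons (rcons (z :: p) y) x) by rewrite rcons_path pa last_rcons eyx.
simpl; move=> ->; rewrite size_rcons; by [].
Qed.

Lemma good_rev (T : finType) (e : rel T) (sym : symmetric e) s : good e s -> good e (rev s).
Proof.
case: s => [//|x p] /andP[u pa].
rewrite lastI rev_rcons.
change (uniq (last x p :: rev (belast x p)) && path e (last x p) (rev (belast x p))).
have -> : uniq (last x p :: rev (belast x p)) = uniq (x :: p)
  by rewrite -rev_rcons -lastI rev_uniq.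
rewrite u rev_path /=.
by rewrite (@eq_path _ _ e) // => a b; rewrite /= sym.
Qed.

Lemma endA (T : finType) (e : rel T) (sym : symmetric e) (irr : irreflexive e) (ac : acyclic e) x p y :
  good e (x :: p) -> (forall t, good e t -> size t <= size (x :: p)) -> e x y ->
  exists q, p = y :: q.
Proof.
move=> g mx exy; move/andP: (g) => [u pa].
case: (boolP (y \in x :: p)) => yin.
- have yx : y != x by apply: contraTneq exy => ->; rewrite irr.
  move: yin; rewrite inE (negbTE yx) /= => yp.
  case/splitPr: yp u pa g mx => p1 p2 u pa _ _.
  have eq : x :: p1 ++ y :: p2 = (x :: rcons p1 y) ++ p2 by rewrite /= cat_rcons.
  rewrite eq cat_uniq in u; move/andP: u => [u _].
  rewrite -cat_rcons cat_path in pa; move/andP: pa => [pa _].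
  have := nocyc ac u pa; rewrite sym exy => /(_ erefl) ->; by exists p2.
- have : good e (y :: x :: p) by rewrite /= -/(uniq (x :: p)) yin u /= (sym y x) exy pa.
  by move/mx; rewrite /= ltnn.
Qed.

Lemma endleaf (T : finType) (e : rel T) (sym : symmetric e) (irr : irreflexive e) (ac : acyclic e) x y q :
  good e (x :: y :: q) -> (forall t, good e t -> size t <= size (x :: y :: q)) ->
  deg e x = 1.
Proof.
move=> g m.
rewrite /deg (_ : [set z | e x z] = [set y]) ?cards1 //.
apply/setP=> z; rewrite !inE; apply/idP/eqP => [exz| ->].
- by have [q' [-> _]] := endA sym irr ac g m exz.
- by move/andP: g => [_ /andP[]].
Qed.

Lemma deg1_nbr (T : finType) (e : rel T) z c w : deg e z = 1 -> e z c -> e z w -> w = c.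
Proof.
move=> /eqP/cards1P [d hd] ec ew.
have : c \in [set y | e z y] by rewrite inE.
have : w \in [set y | e z y] by rewrite inE.
by rewrite hd !inE => /eqP -> /eqP ->.
Qed.

Lemma closure_all (T : finType) (e : rel T) (A : {set T}) x : connected e -> x \in A ->
  (forall z w, z \in A -> e z w -> w \in A) -> forall z, z \in A.
Proof.
move=> con xA cl z; have /connectP [p pa ->] := con x z.
elim: p x xA pa => [|y p IH] x xA //= /andP[exy pa].
apply: IH pa; exact: cl exy.
Qed.

Lemma mid (T : finType) (e : rel T) (sym : symmetric e) (irr : irreflexive e) (ac : acyclic e)
  (irrP2 : P2_irreducible e) x0 x1 x2 r :
  good e [:: x0, x1, x2 & r] ->
  (forall t, good e t -> size t <= size [:: x0, x1, x2 & r]) ->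
  [/\ (forall y, e x1 y -> y != x2 -> leaf e y), 3 <= deg e x1 & two_leaf_nbrs e x1].
Proof.
move=> g m.
have g' := g; move/andP: g' => [u pa].
have l0 := endleaf sym irr ac g m.
move: (u) pa; rewrite cons_uniq => /andP[x0n u1].
rewrite /= => /and3P[e01 e12 pr].
move: x0n; rewrite !inE negb_or => /andP[x01 x0n].
move: x0n; rewrite negb_or => /andP[x02 x0r].
move: (u1); rewrite cons_uniq inE negb_or => /andP[/andP[x12 x1r] u2].
have hb : forall y, e x1 y -> y != x2 -> leaf e y.
  move=> y e1y y2; rewrite /leaf.
  case: (eqVneq y x0) => [->|yx0]; first by rewrite l0.
  have y1 : y != x1 by apply: contraTneq e1y => ->; rewrite irr.
  case: (boolP (y \in r)) => yr.
  - case/splitPr: yr u1 pr => r1 r2 u1 pr.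
    have eq : [:: x1, x2 & r1 ++ y :: r2] = (x1 :: rcons (x2 :: r1) y) ++ r2
      by rewrite /= cat_rcons.
    rewrite eq cat_uniq in u1; move/andP: u1 => [u1 _].
    have pa1 : path e x1 (rcons (x2 :: r1) y).
      by rewrite /= e12 -cat_rcons cat_path in pr *; move/andP: pr => [-> _].
    by have := nocyc ac u1 pa1; rewrite sym e1y => /(_ erefl).
  - have gy : good e [:: y, x1, x2 & r].
      change (uniq [:: y, x1, x2 & r] && path e y [:: x1, x2 & r]).
      rewrite cons_uniq u1 /= sym e1y e12 pr !inE.
      by rewrite (negbTE y1) (negbTE y2) (negbTE yr).
    have my : forall t, good e t -> size t <= size [:: y, x1, x2 & r] by move=> t /m.
    by rewrite (endleaf sym irr ac gy my).
have d2 : 2 <= deg e x1.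
  have c2 := cards2 x0 x2; rewrite x02 in c2; rewrite /deg -c2.
  apply: subset_leq_card; apply/subsetP => z; rewrite !inE => /orP[] /eqP ->.
  - by rewrite sym.
  - by [].
have d3 : 3 <= deg e x1.
  have : deg e x1 != 2.
    apply/eqP => d; apply: irrP2; exists x0, x1, x2; split.
    - by rewrite x01 x12 x02.
    - by [].
    - by [].
    - by [].
    - by rewrite sym e01 e12.
  by move=> h; rewrite ltn_neqAle eq_sym h d2.
split=> //.
rewrite /two_leaf_nbrs.
have : #|[set y | e x1 y] :\ x2| <= #|[set y | e x1 y && leaf e y]|.
  apply: subset_leq_card; apply/subsetP => z; rewrite !inE => /andP[z2 ez].
  by rewrite ez (hb z ez z2).
move: d3; rewrite /deg (cardsD1 x2 [set y | e x1 y]) inE e12 add1n ltnS.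
by move=> h1 h2; apply: leq_trans h1 h2.
Qed.

Theorem lemma1 (T : finType) (e : rel T) :
  is_tree e -> P2_irreducible e ->
  [\/ is_K1 e,
      is_P2 e,
      (exists n : nat, 3 <= n /\ is_star e n)
    | exists u v : T, [/\ u != v, two_leaf_nbrs e u & two_leaf_nbrs e v]].
Proof.
move=> [[sym irr] T0 con ac] irrP2.
case: (leqP #|T| 1) => hT.
  by apply: Or41; rewrite /is_K1; lia.
have [a [b [_ _ ab]]] := card_gt1P hT.
have [p pa lp] := connectP (con a b).
case: p pa lp => [|c p] pa lp; first by rewrite lp eqxx in ab.
move/andP: pa => [eac _].
have gac : good e [:: a; c].
  by rewrite /= andbT eac inE !andbT; apply: contraTneq eac => ->; rewrite irr.
have [s [gs ls ms]] := exists_max gac.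
case: s gs ls ms => [|x0 [|x1 q]] gs ls ms; [by []|by []|].
clear ls; case: q gs ms => [|x2 r] gs ms.
-
  have gr : good e [:: x1; x0] by exact: (good_rev sym gs).
  have mr : forall t, good e t -> size t <= size [:: x1; x0] by move=> t /ms.
  have n0 : forall z, e x0 z -> z = x1.
    by move=> z ez; have [q' [->]] := endA sym irr ac gs ms ez.
  have n1 : forall z, e x1 z -> z = x0.
    by move=> z ez; have [q' [->]] := endA sym irr ac gr mr ez.
  apply: Or42; exists x0, x1; split.
  + by move/andP: gs => [/= /andP[]]; rewrite inE.
  + by move/andP: gs => [_ /= /andP[]].
  + move=> z; rewrite -in_set2.
    apply: (closure_all con (x := x0)); first by rewrite in_set2 eqxx.
    move=> z' w; rewrite in_set2 => /orP[] /eqP -> ew.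
    * by rewrite (n0 _ ew) in_set2 eqxx orbT.
    * by rewrite (n1 _ ew) in_set2 eqxx.
- have [hb1 hd1 ht1] := mid sym irr ac irrP2 gs ms.
  have gr := good_rev sym gs.
  have mr : forall t, good e t -> size t <= size (rev [:: x0, x1, x2 & r])
    by move=> t; rewrite size_rev; move/ms.
  case: r gs ms gr mr hb1 hd1 ht1 => [|y r] gs ms gr mr hb1 hd1 ht1.
  +
    have [hb2 _ _] := mid sym irr ac irrP2 gr mr.
    move/andP: (gs) => [u _]; move: u; rewrite /= !inE !negb_or andbT => /andP[/andP[x01 x02] _].
    have allleaf : forall y, e x1 y -> leaf e y.
      move=> y ey; case: (eqVneq y x2) => [yx|y2]; last exact: hb1.
      by apply: hb2 => //; rewrite yx eq_sym.
    pose A := x1 |: [set y | e x1 y].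
    have allA : forall z, z \in A.
      apply: (closure_all con (x := x1)); first by rewrite setU11.
      move=> z w; rewrite !inE => /orP[/eqP ->|ez] ew.
      * by rewrite ew orbT.
      * have := allleaf z ez; rewrite /leaf => /eqP d.
        by rewrite (deg1_nbr d (_ : e z x1) ew) ?eqxx // sym.
    apply: Or43; exists (deg e x1); split => //; split.
    * have -> : #|T| = #|A| by apply: eq_card => z; rewrite allA.
      by rewrite cardsU1 inE irr.
    * exists x1 => x z.
      case: (eqVneq x x1) => [->|xn] /=.
      - case: (eqVneq z x1) => [->|zn]; first by rewrite irr.
        by have := allA z; rewrite !inE (negbTE zn).
      - have := allA x; rewrite !inE (negbTE xn) /= => ex.
        rewrite andbT.
        have := allleaf x ex; rewrite /leaf => /eqP d.
        apply/idP/eqP => [ez|->]; first by rewrite (deg1_nbr d (_ : e x x1) ez) // sym.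
        by rewrite sym.
  +
    case Er: (rev [:: x0, x1, x2, y & r]) gr mr => [|z0 [|z1 [|z2 r'']]] gr mr.
    * by move: (congr1 size Er); rewrite size_rev.
    * by move: (congr1 size Er); rewrite size_rev.
    * by move: (congr1 size Er); rewrite size_rev.
    have [_ _ ht2] := mid sym irr ac irrP2 gr mr.
    apply: Or44; exists x1, z1; split => //.
    have hz1 : z1 = nth x0 (rev [:: x0, x1, x2, y & r]) 1 by rewrite Er.
    rewrite hz1 nth_rev //=.
    move/andP: gs => [u _].
    move: u; rewrite cons_uniq => /andP[_]; rewrite cons_uniq => /andP[x1n _].
    apply: contraNneq x1n => ->; apply: mem_nth; by rewrite /= ltnS leqnSn.
Qed.
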